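(* Let $\mathcal{G}$ be a tomographically local GPT and let $\widetilde{\xi}:\mathcal{G}\to\mathbf{SubStoch}$ be an ontological model of $\mathcal{G}$, with $\widetilde\xi(A)=\mathbb{R}^{\Lambda_A}$. Then for each system $A$ there is an invertible linear map $\chi_A:A\to\mathbb{R}^{\Lambda_A}$ such that: (i) for every process $T:A\to B$ of $\mathcal{G}$, $\widetilde{\xi}(T)=\chi_B\circ T\circ\chi_A^{-1}$; (ii) $\mathbf{1}_{\Lambda_A}\circ\chi_A=u_A$, where $\mathbf{1}_{\Lambda_A}$ is the all-ones covector on $\mathbb{R}^{\Lambda_A}$; (iii) for every pair of systems $A,B$, the linear map $X\mapsto\chi_B\circ X\circ\chi_A^{-1}$ (from linear maps $A\to B$ to linear maps $\mathbb{R}^{\Lambda_A}\to\mathbb{R}^{\Lambda_B}$) is positive: it maps the cone of nonnegative linear combinations of processes $A\to B$ of $\mathcal{G}$ into the cone of nonnegative linear combinations of substochastic maps $\mathbb{R}^{\Lambda_A}\to\mathbb{R}^{\Lambda_B}$.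
   Context: A process theory consists of systems (closed under a composition $A\otimes B$, with a trivial system $I$) and processes $T:A\to B$, closed under sequential composition $\circ$ and parallel composition $\otimes$ and containing identities; processes $I\to A$ are states, $A\to I$ effects, $I\to I$ scalars. $\mathbf{RLinear}$ is the process theory of finite-dimensional real vector spaces (composite $=$ tensor product, trivial system $\mathbb{R}$) and linear maps. $\mathbf{SubStoch}$ is the sub-process theory of $\mathbf{RLinear}$ whose systems are spaces $\mathbb{R}^\Lambda$ of real functions on finite sets $\Lambda$ (with $\mathbb{R}^{\Lambda}\otimes\mathbb{R}^{\Lambda'}=\mathbb{R}^{\Lambda\times\Lambda'}$, trivial system $\mathbb{R}$), and whose processes $\mathbb{R}^\Lambda\to\mathbb{R}^{\Lambda'}$ are the substochastic maps, i.e. linear maps $v\mapsto(\lambda'\mapsto\sum_\lambda f(\lambda'|\lambda)v(\lambda))$ with $f(\lambda'|\lambda)\in[0,1]$ and $\sum_{\lambda'}f(\lambda'|\lambda)\le1$ for all $\lambda$. The all-ones covector $\mathbf{1}_\Lambda$ is $v\mapsto\sum_\lambda v(\lambda)$. A tomographically local GPT is here a sub-process theory $\mathcal{G}$ of $\mathbf{RLinear}$ (closed under $\circ$, $\otimes$, containing identities) such that: each system $A$ is a finite-dimensional real vector space and composites are tensor products; the states of $A$ span $A$ and the effects on $A$ span $A^*$; every scalar lies in $[0,1]$; for each type the set of processes is closed under convex combinations; each system $A$ has a distinguished deterministic effect $u_A$ with $u_{A\otimes B}=u_A\otimes u_B$. An ontological model of $\mathcal{G}$ is a map $\widetilde\xi:\mathcal{G}\to\mathbf{SubStoch}$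 that is diagram-preserving (it assigns to each system $A$ a space $\mathbb{R}^{\Lambda_A}$, with $\widetilde\xi(A\otimes B)=\mathbb{R}^{\Lambda_A}\otimes\mathbb{R}^{\Lambda_B}$, $\widetilde\xi(I)=\mathbb{R}$, and to each process $T:A\to B$ a substochastic map $\widetilde\xi(T):\mathbb{R}^{\Lambda_A}\to\mathbb{R}^{\Lambda_B}$, preserving $\circ$, $\otimes$ and identities) and satisfies: (1) $\widetilde\xi(u_A)=\mathbf{1}_{\Lambda_A}$; (2) $\widetilde\xi(s)=s$ for every scalar $s$; (3) it preserves convex combinations of processes of the same type and coarse-grainings (sums) of effects whenever these relations hold in $\mathcal{G}$. *)

(* Defs.v *)
From HB Require Import structures.
From mathcomp Require Import all_boot all_order all_algebra.
From mathcomp Require Import mxtens reals.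
Set Implicit Arguments. Unset Strict Implicit. Unset Printing Implicit Defensive.
Import Order.TTheory GRing.Theory Num.Theory.
Local Open Scope ring_scope.

(* A finite-dimensional real vector space is R^n
   (column vectors 'cV_n); a linear map R^n -> R^m is a matrix 'M_(m, n)
   acting on column vectors, sequential composition S o T is [S *m T], and
   the tensor product of spaces/maps is the Kronecker product [tensmx]
   (R^n (x) R^m = R^(n*m), with the standard index pairing).
   In SubStoch, R^Lambda for a finite set Lambda with |Lambda| = n is R^n,
   and a substochastic map R^Lambda -> R^Lambda' is the matrix
   (f(l'|l))_{l',l}. *)

Section Defs.
Variable R : realType.

(** Systems of a process theory (a sub-process theory of RLinear):
    abstract system labels, each carrying its underlying space R^(sdim A);
    the composite A (x) B carries R^(sdim A) (x) R^(sdim B) = R^(sdim A * sdim B),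
    the trivial system carries R. *)
Record sysdata := SysData {
  sys :> Type;
  sdim : sys -> nat;
  tens : sys -> sys -> sys;
  triv : sys;
  sdim_tens : forall A B, sdim (tens A B) = (sdim A * sdim B)%N;
  sdim_triv : sdim triv = 1%N
}.

Variable S : sysdata.

Definition pmat (A B : S) := 'M[R]_(sdim B, sdim A).

Definition ptens (A A' B B' : S) (T : pmat A B) (T' : pmat A' B') :
    pmat (tens A A') (tens B B') :=
  castmx (esym (sdim_tens B B'), esym (sdim_tens A A')) (tensmx T T').

Lemma sdim_triv_triv : sdim (tens (triv S) (triv S)) = sdim (triv S).
Proof. by rewrite sdim_tens sdim_triv. Qed.

Definition lincomb m n k (c : 'I_k -> R) (X : 'I_k -> 'M[R]_(m, n)) :=
  \sum_(i < k) c i *: X i.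

(** Tomographically local GPT: [P A B T] says T is a process A -> B,
    [u A] is the distinguished deterministic effect of A. *)
Definition is_TL_GPT (P : forall A B : S, pmat A B -> Prop)
    (u : forall A : S, pmat A (triv S)) : Prop :=
  (forall A : S, P A A 1%:M) /\
  (forall (A B C : S) (T : pmat A B) (T' : pmat B C),
      P A B T -> P B C T' -> P A C (T' *m T)) /\
  (forall (A A' B B' : S) (T : pmat A B) (T' : pmat A' B'),
      P A B T -> P A' B' T' -> P (tens A A') (tens B B') (ptens T T')) /\
  (forall (A : S) (v : 'cV[R]_(sdim A)), exists k (c : 'I_k -> R)
      (s : 'I_k -> pmat (triv S) A),
      (forall i, P (triv S) A (s i)) /\
      v = lincomb c (fun i => castmx (erefl, sdim_triv S) (s i))) /\
  (forall (A : S) (w : 'rV[R]_(sdim A)), exists k (c : 'I_k -> R)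
      (e : 'I_k -> pmat A (triv S)),
      (forall i, P A (triv S) (e i)) /\
      w = lincomb c (fun i => castmx (sdim_triv S, erefl) (e i))) /\
  (forall s : pmat (triv S) (triv S), P (triv S) (triv S) s ->
      forall i j, 0 <= s i j <= 1) /\
  (forall (A B : S) (T1 T2 : pmat A B) (p : R), 0 <= p <= 1 ->
      P A B T1 -> P A B T2 -> P A B (p *: T1 + (1 - p) *: T2)) /\
  (forall A : S, P A (triv S) (u A)) /\
  (forall A B : S,
      u (tens A B) = castmx (sdim_triv_triv, erefl) (ptens (u A) (u B))).

Definition substoch m n (M : 'M[R]_(m, n)) : Prop :=
  (forall i j, 0 <= M i j <= 1) /\ (forall j, \sum_i M i j <= 1).

(** Data of a diagram-preserving map G -> SubStoch: each system A is sent to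
    R^(lam A) (i.e. R^Lambda_A with |Lambda_A| = lam A), composites to
    tensor products, the trivial system to R, and each linear map A -> B to
    a linear map R^(lam A) -> R^(lam B) (only its values on processes of G
    matter). *)
Record ontdata := OntData {
  lam : S -> nat;
  lam_tens : forall A B, lam (tens A B) = (lam A * lam B)%N;
  lam_triv : lam (triv S) = 1%N;
  xi : forall A B : S, pmat A B -> 'M[R]_(lam B, lam A)
}.

Definition otens (M : ontdata) (A A' B B' : S)
    (X : 'M[R]_(lam M B, lam M A)) (Y : 'M[R]_(lam M B', lam M A')) :
    'M[R]_(lam M (tens B B'), lam M (tens A A')) :=
  castmx (esym (lam_tens M B B'), esym (lam_tens M A A')) (tensmx X Y).

Definition is_ontological_model (P : forall A B : S, pmat A B -> Prop)
    (u : forall A : S, pmat A (triv S)) (M : ontdata) : Prop :=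
  (forall (A B : S) (T : pmat A B), P A B T -> substoch (xi M T)) /\
  (forall A : S, xi M (1%:M : pmat A A) = 1%:M) /\
  (forall (A B C : S) (T : pmat A B) (T' : pmat B C),
      P A B T -> P B C T' -> xi M (T' *m T) = xi M T' *m xi M T) /\
  (forall (A A' B B' : S) (T : pmat A B) (T' : pmat A' B'),
      P A B T -> P A' B' T' ->
      xi M (ptens T T') = otens (xi M T) (xi M T')) /\
  (forall A : S,
      xi M (u A) = castmx (esym (lam_triv M), erefl) (const_mx 1 : 'M[R]_(1, lam M A))) /\
  (forall s : pmat (triv S) (triv S), P (triv S) (triv S) s ->
      xi M s = castmx (esym (lam_triv M), esym (lam_triv M))
                 (castmx (sdim_triv S, sdim_triv S) s)) /\
  (forall (A B : S) k (p : 'I_k -> R) (T : 'I_k -> pmat A B) (T0 : pmat A B),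
      (forall i, 0 <= p i) -> \sum_(i < k) p i = 1 ->
      (forall i, P A B (T i)) -> P A B T0 -> T0 = lincomb p T ->
      xi M T0 = lincomb p (fun i => xi M (T i))) /\
  (forall (A : S) k (e : 'I_k -> pmat A (triv S)) (e0 : pmat A (triv S)),
      (forall i, P A (triv S) (e i)) -> P A (triv S) e0 ->
      e0 = \sum_(i < k) e i ->
      xi M e0 = \sum_(i < k) xi M (e i)).

Definition cone m n (Q : 'M[R]_(m, n) -> Prop) (X : 'M[R]_(m, n)) : Prop :=
  exists k (c : 'I_k -> R) (Y : 'I_k -> 'M[R]_(m, n)),
    (forall i, 0 <= c i) /\ (forall i, Q (Y i)) /\ X = lincomb c Y.

End Defs.

(* Main.v *)
Require Import Defs.
From HB Require Import structures.
From mathcomp Require Import all_boot all_order all_algebra.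
From mathcomp Require Import mxtens reals.
From mathcomp Require Import ring lra.
From Stdlib Require Import Classical_Prop ClassicalEpsilon.
Import Order.TTheory GRing.Theory Num.Theory.
Local Open Scope ring_scope.

Lemma cast_scalar (R : pzRingType) a b (e : a = b) (x : R) :
  castmx (e, e) (x%:M : 'M[R]_a) = x%:M.
Proof. by case: b / e; rewrite castmx_id. Qed.

Lemma cast_mul_inner (R : pzRingType) m n k k' (e : k = k')
  (X : 'M[R]_(m,k)) (Y : 'M[R]_(k,n)) :
  castmx (erefl m, e) X *m castmx (e, erefl n) Y = X *m Y.
Proof. by case: k' / e; rewrite !castmx_id. Qed.

Lemma cast_mull (R : pzRingType) m m' n k (e : m = m')
  (X : 'M[R]_(m,k)) (Y : 'M[R]_(k,n)) :
  castmx (e, erefl k) X *m Y = castmx (e, erefl n) (X *m Y).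
Proof. by case: m' / e; rewrite !castmx_id. Qed.

Lemma JK (R : pzRingType) a b (e : a = b) :
  castmx (e, erefl a) (1%:M : 'M[R]_a) *m castmx (erefl a, e) 1%:M = 1%:M.
Proof. by case: b / e; rewrite !castmx_id mul1mx. Qed.

Lemma KJ (R : pzRingType) a b (e : a = b) :
  castmx (erefl a, e) (1%:M : 'M[R]_a) *m castmx (e, erefl a) 1%:M = 1%:M.
Proof. by case: b / e; rewrite !castmx_id mul1mx. Qed.

Lemma mx1s (R : pzRingType) k (e : k = 1%N) (t : 'M[R]_k) :
  t = (t (cast_ord (esym e) ord0) (cast_ord (esym e) ord0))%:M.
Proof. subst k; rewrite cast_ord_id; exact: mx11_scalar. Qed.

Lemma split_l m n (j : 'I_m) : split (lshift n j) = inl j.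
Proof. exact: (unsplitK (inl j)). Qed.
Lemma split_r m n (j : 'I_n) : split (rshift m j) = inr j.
Proof. exact: (unsplitK (inr j)). Qed.

Lemma conv_closed (R : realType) (S : sysdata)
  (P : forall A B : S, pmat R A B -> Prop)
  (Hc : forall (A B : S) (T1 T2 : pmat R A B) (p : R), 0 <= p <= 1 ->
      P A B T1 -> P A B T2 -> P A B (p *: T1 + (1 - p) *: T2))
  (A B : S) k (p : 'I_k -> R) (T : 'I_k -> pmat R A B) :
  (forall i, 0 <= p i) -> \sum_i p i = 1 -> (forall i, P A B (T i)) ->
  P A B (lincomb p T).
Proof.
elim: k p T => [|k IH] p T p0 p1 PT.
  by move: p1; rewrite big_ord0 => /eqP; rewrite eq_sym oner_eq0.
rewrite /lincomb big_ord_recr /=; move: p1; rewrite big_ord_recr /= => p1.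
set q := p ord_max in p1 *.
set r := \sum_(i < k) p (widen_ord (leqnSn k) i) in p1 *.
have r0 : 0 <= r by apply: sumr_ge0 => i _.
have q0 : 0 <= q by apply: p0.
have [r_eq0|r_n0] := eqVneq r 0.
  have pz := psumr_eq0P (fun i _ => p0 (widen_ord (leqnSn k) i)) r_eq0.
  rewrite big1 ?add0r; last by move=> i _; rewrite pz // scale0r.
  have -> : q = 1 by rewrite -p1 r_eq0 add0r.
  by rewrite scale1r.
have := Hc _ _ (lincomb (fun i => p (widen_ord (leqnSn k) i) / r)
                 (fun i => T (widen_ord (leqnSn k) i))) (T ord_max) r _
          (IH _ _ _ _ _) (PT _).
have -> : 1 - r = q by rewrite -p1 addrAC subrr add0r.
have -> : r *: lincomb (fun i => p (widen_ord (leqnSn k) i) / r)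
                 (fun i => T (widen_ord (leqnSn k) i)) =
          \sum_(i < k) p (widen_ord (leqnSn k) i) *: T (widen_ord (leqnSn k) i).
  rewrite /lincomb scaler_sumr; apply: eq_bigr => i _.
  by rewrite scalerA mulrC divfK.
apply.
- by rewrite r0 /= -p1 lerDl.
- by move=> i; rewrite divr_ge0.
- by rewrite -mulr_suml divff.
- by move=> i.
Qed.

Lemma castmx_irr (R : Type) m1 n1 m2 n2 (e1 e1' : m1 = m2) (e2 e2' : n1 = n2)
  (X : 'M[R]_(m1, n1)) : castmx (e1, e2) X = castmx (e1', e2') X.
Proof. by rewrite (eq_irrelevance e1 e1') (eq_irrelevance e2 e2'). Qed.

Lemma sum_rescale (R : realType) m n k (f : 'I_k -> R) (Z : 'I_k -> 'M[R]_(m,n)) (W : R) :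
  W != 0 -> \sum_i f i *: Z i = W *: lincomb (fun i => f i / W) Z.
Proof.
move=> Wn0; rewrite /lincomb scaler_sumr; apply: eq_bigr => i _.
by rewrite scalerA mulrC divfK.
Qed.

Lemma affine_xi (R : realType) (S : sysdata)
  (P : forall A B : S, pmat R A B -> Prop)
  (Hc : forall (A B : S) (T1 T2 : pmat R A B) (p : R), 0 <= p <= 1 ->
      P A B T1 -> P A B T2 -> P A B (p *: T1 + (1 - p) *: T2))
  (M : ontdata R S)
  (H3a : forall (A B : S) k (p : 'I_k -> R) (T : 'I_k -> pmat R A B) (T0 : pmat R A B),
      (forall i, 0 <= p i) -> \sum_(i < k) p i = 1 ->
      (forall i, P A B (T i)) -> P A B T0 -> T0 = lincomb p T ->
      xi M T0 = lincomb p (fun i => xi M (T i)))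
  (A B : S) k (a : 'I_k -> R) (X : 'I_k -> pmat R A B) :
  (forall i, P A B (X i)) -> \sum_i a i = 0 -> \sum_i a i *: X i = 0 ->
  \sum_i a i *: xi M (X i) = 0.
Proof.
move=> PX sa0 sX0.
pose ap i := if 0 <= a i then a i else 0.
pose an i := if 0 <= a i then 0 else - a i.
have aE i : a i = ap i - an i.
  by rewrite /ap /an; case: ifP => _; rewrite ?subr0 ?sub0r ?opprK.
have ap0 i : 0 <= ap i by rewrite /ap; case: ifP.
have an0 i : 0 <= an i.
  rewrite /an; case: ifP => // /negbT h; rewrite oppr_ge0; apply/ltW.
  by rewrite ltNge.
have splitE (V : lmodType R) (Z : 'I_k -> V) :
    \sum_i a i *: Z i = \sum_i ap i *: Z i - \sum_i an i *: Z i.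
  by rewrite -sumrB; apply: eq_bigr => i _; rewrite aE scalerBl.
have sE : \sum_i ap i = \sum_i an i.
  have : \sum_i a i = \sum_i ap i - \sum_i an i.
    by rewrite -sumrB; apply: eq_bigr => i _; rewrite aE.
  by rewrite sa0 => /eqP; rewrite eq_sym subr_eq0 => /eqP.
set W := \sum_i ap i in sE.
have [W0|Wn0] := eqVneq W 0.
  have apz := psumr_eq0P (fun i _ => ap0 i) W0.
  have Wn : \sum_i an i = 0 by rewrite -sE.
  have anz := psumr_eq0P (fun i _ => an0 i) Wn.
  by rewrite big1 // => i _; rewrite aE apz // anz // subr0 scale0r.
have sXE : \sum_i ap i *: X i = \sum_i an i *: X i.
  by apply/eqP; rewrite -subr_eq0 -splitE sX0.
have p0 i : 0 <= ap i / W by rewrite divr_ge0 // /W sumr_ge0.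
have q0 i : 0 <= an i / W by rewrite divr_ge0 // /W sumr_ge0.
have p1 : \sum_i ap i / W = 1 by rewrite -mulr_suml divff.
have q1 : \sum_i an i / W = 1 by rewrite -mulr_suml -/W sE divff // -sE.
set Y := lincomb (fun i => ap i / W) X.
have PY : P A B Y by apply: conv_closed.
have YE : Y = lincomb (fun i => an i / W) X.
  apply: (@scalerI _ _ W Wn0).
  by rewrite -!sum_rescale.
have xp := H3a _ _ _ _ _ _ p0 p1 PX PY erefl.
have xq := H3a _ _ _ _ _ _ q0 q1 PX PY YE.
by rewrite splitE (@sum_rescale _ _ _ _ _ _ _ Wn0) (@sum_rescale _ _ _ _ _ _ _ Wn0) -xp -xq subrr.
Qed.

Definition catf (T : Type) k1 k2 (f : 'I_k1 -> T) (g : 'I_k2 -> T) (i : 'I_(k1 + k2)) : T :=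
  match split i with inl j => f j | inr j => g j end.
Arguments catf {T k1 k2}.

Lemma catf_map (T U : Type) k1 k2 (h : T -> U) (f : 'I_k1 -> T) (g : 'I_k2 -> T) i :
  h (catf f g i) = catf (fun j => h (f j)) (fun j => h (g j)) i.
Proof. by rewrite /catf; case: split. Qed.

Lemma catf2 (T T' U : Type) k1 k2 (h : T -> T' -> U) (f : 'I_k1 -> T) (g : 'I_k2 -> T)
   (f' : 'I_k1 -> T') (g' : 'I_k2 -> T') i :
  h (catf f g i) (catf f' g' i) = catf (fun j => h (f j) (f' j)) (fun j => h (g j) (g' j)) i.
Proof. by rewrite /catf; case: split. Qed.

Lemma catf_all (T : Type) k1 k2 (Q : T -> Prop) (f : 'I_k1 -> T) (g : 'I_k2 -> T) :
  (forall j, Q (f j)) -> (forall j, Q (g j)) -> forall i, Q (catf f g i).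
Proof. by move=> Hf Hg i; rewrite /catf; case: split. Qed.

Lemma sum_cat (V : nmodType) k1 k2 (f : 'I_k1 -> V) (g : 'I_k2 -> V) :
  \sum_(i < k1 + k2) catf f g i = \sum_i f i + \sum_i g i.
Proof.
rewrite big_split_ord /=; congr (_ + _); apply: eq_bigr => i _;
  by rewrite /catf ?split_l ?split_r.
Qed.

Lemma sum_cat2 (T T' : Type) (V : nmodType) k1 k2 (h : T -> T' -> V)
  (f : 'I_k1 -> T) (g : 'I_k2 -> T) (f' : 'I_k1 -> T') (g' : 'I_k2 -> T') :
  \sum_(i < k1 + k2) h (catf f g i) (catf f' g' i) =
  \sum_i h (f i) (f' i) + \sum_i h (g i) (g' i).
Proof.
rewrite big_split_ord /=; congr (_ + _); apply: eq_bigr => i _;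
  by rewrite /catf ?split_l ?split_r.
Qed.

Theorem proposition3 (R : realType) (S : sysdata)
    (P : forall A B : S, pmat R A B -> Prop)
    (u : forall A : S, pmat R A (triv S))
    (HG : is_TL_GPT P u)
    (M : ontdata R S) (HM : is_ontological_model P u M) :
  exists (chi : forall A : S, 'M[R]_(lam M A, sdim A))
         (chiinv : forall A : S, 'M[R]_(sdim A, lam M A)),
    (forall A : S, chi A *m chiinv A = 1%:M /\ chiinv A *m chi A = 1%:M) /\
    (forall (A B : S) (T : pmat R A B), P A B T ->
        xi M T = chi B *m T *m chiinv A) /\
    (forall A : S,
        (const_mx 1 : 'M[R]_(1, lam M A)) *m chi A
        = castmx (sdim_triv S, erefl) (u A)) /\
    (forall (A B : S) (X : pmat R A B),
        cone (P A B) X ->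
        cone (@substoch R (lam M B) (lam M A)) (chi B *m X *m chiinv A)).
Proof.
case: HG => Hid [Hcomp [Hpar [Hst [Hef [Hsc [Hconv [Hu Hutens]]]]]]].
case: HM => Hsub [Hxid [Hxcomp [Hxpar [Hxu [Hxsc [H3a H3b]]]]]].
have Rep : forall A : S, exists k (c : 'I_k -> R) (s : 'I_k -> pmat R (triv S) A)
    (e : 'I_k -> pmat R A (triv S)),
    (forall m, P _ _ (s m)) /\ (forall m, P _ _ (e m)) /\
    (1%:M : 'M[R]_(sdim A)) = \sum_m c m *: (s m *m e m).
  move=> A.
  pose RepP (X : 'M[R]_(sdim A)) := exists k (c : 'I_k -> R) (s : 'I_k -> pmat R (triv S) A)
    (e : 'I_k -> pmat R A (triv S)),
    (forall m, P _ _ (s m)) /\ (forall m, P _ _ (e m)) /\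
    X = \sum_m c m *: (s m *m e m).
  have rep0 : RepP 0.
    exists 0%N, (fun _ => 0), (fun _ => 0), (fun _ => 0).
    by do !split => //; [case | case | rewrite big_ord0].
  have repD : forall X Y, RepP X -> RepP Y -> RepP (X + Y).
    move=> X Y [k1 [c1 [s1 [e1 [Ps1 [Pe1 ->]]]]]] [k2 [c2 [s2 [e2 [Ps2 [Pe2 ->]]]]]].
    exists (k1 + k2)%N, (catf c1 c2), (catf s1 s2), (catf e1 e2).
    split; first exact: catf_all.
    split; first exact: catf_all.
    rewrite -sum_cat; apply: eq_bigr => i _.
    by rewrite /catf; case: split.
  have repZ : forall a X, RepP X -> RepP (a *: X).
    move=> a X [k [c [s [e [Ps [Pe ->]]]]]].
    exists k, (fun m => a * c m), s, e; do !split => //.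
    by rewrite scaler_sumr; apply: eq_bigr => i _; rewrite scalerA.
  have repSE : forall (s : pmat R (triv S) A) (e : pmat R A (triv S)),
      P _ _ s -> P _ _ e -> RepP (s *m e).
    move=> s e Ps Pe; exists 1%N, (fun _ => 1), (fun _ => s), (fun _ => e).
    by do !split => //; rewrite big_ord1 scale1r.
  have repSum : forall k (F : 'I_k -> 'M[R]_(sdim A)), (forall i, RepP (F i)) ->
      RepP (\sum_i F i).
    by move=> k F HF; apply: (big_ind RepP).
  have repCR : forall (v : 'cV[R]_(sdim A)) (w : 'rV[R]_(sdim A)), RepP (v *m w).
    move=> v w.
    have [k [c [s [Ps ->]]]] := Hst A v.
    have [k' [c' [e [Pe ->]]]] := Hef A w.
    rewrite /lincomb mulmx_suml; apply: (repSum) => i; rewrite -scalemxAl; apply: (repZ).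
    rewrite mulmx_sumr; apply: (repSum) => j; rewrite -scalemxAr; apply: (repZ).
    by rewrite cast_mul_inner; apply: (repSE).
  have := repCR.
  have : RepP 1%:M.
    rewrite [X in RepP X]matrix_sum_delta; apply: (repSum) => i; apply: (repSum) => j.
    apply: (repZ); rewrite -(mul_delta_mx (ord0 : 'I_1) i j); exact: (repCR).
  by [].
have eqIL : sdim (triv S) = lam M (triv S) by rewrite sdim_triv lam_triv.
pose J : 'M[R]_(lam M (triv S), sdim (triv S)) := castmx (eqIL, erefl) 1%:M.
pose K : 'M[R]_(sdim (triv S), lam M (triv S)) := castmx (erefl, eqIL) 1%:M.
have JK1 : J *m K = 1%:M by apply: JK.
have KJ1 : K *m J = 1%:M by apply: KJ.
pose i0 := cast_ord (esym (sdim_triv S)) ord0.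
pose tval (t : pmat R (triv S) (triv S)) := t i0 i0.
have scal_t : forall t : pmat R (triv S) (triv S), t = (tval t)%:M.
  by move=> t; exact: mx1s.
have xi_scal : forall t : pmat R (triv S) (triv S), P _ _ t -> xi M t = (tval t)%:M.
  by move=> t Pt; rewrite Hxsc // {1}(scal_t t) !cast_scalar.
have xiJK : forall t : pmat R (triv S) (triv S), P _ _ t -> xi M t = J *m t *m K.
  move=> t Pt; rewrite xi_scal // {2}(scal_t t) mul_mx_scalar -scalemxAl JK1.
  by rewrite scalemx1.
have Good : forall A : S, exists k (c : 'I_k -> R) (s : 'I_k -> pmat R (triv S) A)
    (e : 'I_k -> pmat R A (triv S)),
    (forall m, P _ _ (s m)) /\ (forall m, P _ _ (e m)) /\
    (1%:M : 'M[R]_(sdim A)) = \sum_m c m *: (s m *m e m) /\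
    (1%:M : 'M[R]_(lam M A)) = \sum_m c m *: (xi M (s m) *m xi M (e m)).
  move=> A; have [k [c [s [e [Ps [Pe E1]]]]]] := Rep A.
  exists k, c, s, e; do !split => //.
  have [d0|dpos] := posnP (sdim A).
    have lam0 : lam M A = 0%N.
      have [//|lpos] := posnP (lam M A).
      have u0 : u A = \sum_(i < 0) (fun _ => u A) i.
        by rewrite big_ord0; apply/matrixP => i [j hj]; exfalso; move: hj; rewrite d0.
      have := H3b A 0%N (fun _ => u A) (u A) (fun i => Hu A) (Hu A) u0.
      rewrite big_ord0 Hxu => /matrixP /(_ (cast_ord (esym (lam_triv M)) ord0) (Ordinal lpos)).
      by rewrite castmxE !mxE => /eqP; rewrite oner_eq0.
    by apply/matrixP => -[i hi]; exfalso; move: hi; rewrite lam0.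
  have [s0 Ps0] : exists s0 : pmat R (triv S) A, P _ _ s0.
    have [k1 [c1 [s1 [Ps1 E]]]] := Hst A (const_mx 1).
    case: k1 c1 s1 Ps1 E => [|k1] c1 s1 Ps1 E.
      move/matrixP: E => /(_ (Ordinal dpos) ord0).
      by rewrite /lincomb big_ord0 !mxE => /eqP; rewrite oner_eq0.
    by exists (s1 ord0).
  have [t [tau [beta [Pt [tE sumE]]]]] : exists (t : pmat R (triv S) (triv S)) (tau beta : R), P _ _ t /\
      t = (tau%:M : pmat R (triv S) (triv S)) /\ 1 - \sum_m c m + beta * (1 - tau) = 0.
    case: (classic (exists t : pmat R (triv S) (triv S), P _ _ t /\ tval t != 1)).
      move=> [t [Pt tn1]]; exists t, (tval t), ((\sum_m c m - 1) / (1 - tval t)).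
      split => //; split; first exact: scal_t.
      rewrite divfK; last by rewrite subr_eq0 eq_sym.
      by rewrite addrC addrA subrK subrr.
    move=> Hno.
    have all1 : forall t : pmat R (triv S) (triv S), P _ _ t -> t = 1%:M.
      move=> t Pt; rewrite (scal_t t); congr (_%:M).
      by apply/eqP/negPn/negP => tn1; apply: Hno; exists t.
    exists 1%:M, 1, 0; split; first exact: Hid.
    split => //.
    rewrite mul0r addr0; apply/eqP; rewrite subr_eq0; apply/eqP.
    have := congr1 (fun X => u A *m X *m s0) E1.
    rewrite mulmx1 (all1 _ (Hcomp _ _ _ _ _ Ps0 (Hu A))) mulmx_sumr mulmx_suml.
    have tE m : u A *m (c m *: (s m *m e m)) *m s0 = c m *: 1%:M.
      rewrite -scalemxAr -scalemxAl mulmxA -(mulmxA _ (e m)).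
      rewrite (all1 _ (Hcomp _ _ _ _ _ (Ps m) (Hu A))).
      by rewrite (all1 _ (Hcomp _ _ _ _ _ Ps0 (Pe m))) mul1mx.
    rewrite (eq_bigr _ (fun m _ => tE m)) -scaler_suml.
    by move/matrixP/(_ i0 i0); rewrite !mxE eqxx mulr1n mulr1.
  pose a := catf (fun m => - c m) (catf (fun _ : 'I_1 => 1)
              (catf (fun _ : 'I_1 => beta) (fun _ : 'I_1 => - (beta * tau)))).
  pose X := catf (fun m => s m *m e m) (catf (fun _ : 'I_1 => (1%:M : pmat R A A))
              (catf (fun _ : 'I_1 => s0 *m t *m u A) (fun _ : 'I_1 => s0 *m u A))).
  have PX : forall i, P _ _ (X i).
    apply: catf_all => [m|]; first exact: Hcomp (Pe m) (Ps m).
    apply: catf_all => [_|]; first exact: Hid.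
    apply: catf_all => _; last exact: Hcomp (Hu A) Ps0.
    exact: Hcomp (Hu A) (Hcomp _ _ _ _ _ Pt Ps0).
  have tX : s0 *m t *m u A = tau *: (s0 *m u A).
    by rewrite tE mul_mx_scalar -scalemxAl.
  have := @affine_xi R S P Hconv M H3a A A _ a X PX.
  rewrite /a /X !sum_cat !big_ord1 sumrN.
  rewrite !sum_cat2 !big_ord1 /=.
  move=> H.
  have H1 : - \sum_(i < k) c i + (1 + (beta - beta * tau)) = 0 by lra.
  have H2 : \sum_(i < k) - c i *: (s i *m e i) +
   (1 *: 1%:M + (beta *: (s0 *m t *m u A) + - (beta * tau) *: (s0 *m u A))) = 0.
    rewrite tX scalerA scaleNr subrr addr0 scale1r.
    by rewrite (eq_bigr _ (fun i _ => scaleNr _ _)) sumrN -E1 addNr.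
  have := H H1 H2.
  have sc := @sum_cat2 R (pmat R A A) _ _ _ (fun (a : R) (Y : pmat R A A) => a *: xi M Y).
  rewrite sc sc sc !big_ord1 /=.
  have tv : tval t = tau by rewrite /tval tE mxE eqxx mulr1n.
  rewrite Hxid (Hxcomp _ _ _ _ _ (Hu A) (Hcomp _ _ _ _ _ Pt Ps0)) (Hxcomp _ _ _ _ _ Pt Ps0).
  rewrite (xi_scal _ Pt) tv (Hxcomp _ _ _ _ _ (Hu A) Ps0).
  rewrite mul_mx_scalar -scalemxAl scalerA scaleNr subrr addr0 scale1r.
  rewrite (eq_bigr _ (fun i _ => scaleNr _ _)) sumrN.
  rewrite (eq_bigr _ (fun i _ => congr1 (fun Y => c i *: Y) (Hxcomp _ _ _ _ _ (Pe i) (Ps i)))).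
  by move/eqP; rewrite addrC subr_eq0 => /eqP.
pose T3 (A : S) := {k : nat & (('I_k -> R) * ('I_k -> pmat R (triv S) A) *
                              ('I_k -> pmat R A (triv S)))%type}.
pose Q (A : S) (d : T3 A) :=
  (forall m, P _ _ ((projT2 d).1.2 m)) /\ (forall m, P _ _ ((projT2 d).2 m)) /\
  (1%:M : 'M[R]_(sdim A)) = \sum_m (projT2 d).1.1 m *: ((projT2 d).1.2 m *m (projT2 d).2 m) /\
  (1%:M : 'M[R]_(lam M A)) = \sum_m (projT2 d).1.1 m *:
        (xi M ((projT2 d).1.2 m) *m xi M ((projT2 d).2 m)).
have G : forall A : S, exists d : T3 A, Q A d.
  by move=> A; have [k [c [s [e H]]]] := Good A; exists (existT _ k (c, s, e)).
pose F A := proj1_sig (constructive_indefinite_description _ (G A)).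
have HF : forall A, Q A (F A).
  by move=> A; exact: (proj2_sig (constructive_indefinite_description _ (G A))).
pose kf A := projT1 (F A).
pose cf A : 'I_(kf A) -> R := (projT2 (F A)).1.1.
pose sf A : 'I_(kf A) -> pmat R (triv S) A := (projT2 (F A)).1.2.
pose ef A : 'I_(kf A) -> pmat R A (triv S) := (projT2 (F A)).2.
have HF' : forall A, (forall m, P _ _ (sf A m)) /\ (forall m, P _ _ (ef A m)) /\
    (1%:M : 'M[R]_(sdim A)) = \sum_m cf A m *: (sf A m *m ef A m) /\
    (1%:M : 'M[R]_(lam M A)) = \sum_m cf A m *: (xi M (sf A m) *m xi M (ef A m)).
  exact: HF.
clear HF Good Rep.
pose chi A : 'M[R]_(lam M A, sdim A) := \sum_m cf A m *: (xi M (sf A m) *m J *m ef A m).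
pose chiinv A : 'M[R]_(sdim A, lam M A) := \sum_m cf A m *: (sf A m *m K *m xi M (ef A m)).
have st_id : forall A (s : pmat R (triv S) A), P _ _ s -> chi A *m s *m K = xi M s.
  move=> A s Ps; have [Ps' [Pe' [E1 E2]]] := HF' A.
  have tE m : cf A m *: (xi M (sf A m) *m J *m ef A m) *m s *m K =
              cf A m *: (xi M (sf A m) *m xi M (ef A m)) *m xi M s.
    rewrite -!scalemxAl; congr (_ *: _).
    rewrite -[X in _ = X]mulmxA -(Hxcomp _ _ _ _ _ Ps (Pe' m)) (xiJK _ (Hcomp _ _ _ _ _ Ps (Pe' m))).
    by rewrite !mulmxA.
  by rewrite /chi !mulmx_suml (eq_bigr _ (fun m _ => tE m)) -mulmx_suml -E2 mul1mx.
have ef_id : forall A (e : pmat R A (triv S)), P _ _ e -> xi M e *m chi A = J *m e.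
  move=> A e Pe; have [Ps' [Pe' [E1 E2]]] := HF' A.
  have tE m : xi M e *m (cf A m *: (xi M (sf A m) *m J *m ef A m)) =
              J *m (e *m (cf A m *: (sf A m *m ef A m))).
    rewrite -!scalemxAr; congr (_ *: _).
    rewrite !mulmxA -(Hxcomp _ _ _ _ _ (Ps' m) Pe) (xiJK _ (Hcomp _ _ _ _ _ (Ps' m) Pe)).
    by rewrite -(mulmxA _ K J) KJ1 mulmx1 !mulmxA.
  by rewrite /chi mulmx_sumr (eq_bigr _ (fun m _ => tE m)) -!mulmx_sumr -E1 mulmx1.
have inv1 : forall A, chi A *m chiinv A = 1%:M.
  move=> A; have [Ps' [Pe' [E1 E2]]] := HF' A.
  rewrite /chiinv mulmx_sumr E2; apply: eq_bigr => m _.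
  by rewrite -scalemxAr !mulmxA (st_id _ _ (Ps' m)).
have inv2 : forall A, chiinv A *m chi A = 1%:M.
  move=> A; have [Ps' [Pe' [E1 E2]]] := HF' A.
  rewrite /chiinv mulmx_suml E1; apply: eq_bigr => m _.
  rewrite -scalemxAl -!mulmxA (ef_id _ _ (Pe' m)).
  by rewrite (mulmxA K J) KJ1 mul1mx.
have xiT : forall (A B : S) (T : pmat R A B), P A B T -> xi M T = chi B *m T *m chiinv A.
  move=> A B T PT; have [Ps' [Pe' [E1 E2]]] := HF' A.
  have h : xi M T *m chi A = chi B *m T.
    have tE m : xi M T *m (cf A m *: (xi M (sf A m) *m J *m ef A m)) =
                chi B *m T *m (cf A m *: (sf A m *m ef A m)).
      rewrite -!scalemxAr; congr (_ *: _).
      rewrite !mulmxA -(Hxcomp _ _ _ _ _ (Ps' m) PT).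
      rewrite -(st_id _ _ (Hcomp _ _ _ _ _ (Ps' m) PT)).
      by rewrite -(mulmxA _ K J) KJ1 mulmx1 !mulmxA.
    rewrite [chi A]/chi mulmx_sumr (eq_bigr _ (fun m _ => tE m)) -mulmx_sumr -E1.
    by rewrite mulmx1.
  by rewrite -h -mulmxA inv1 mulmx1.
clearbody chi chiinv.
exists chi, chiinv; split; first by move=> A; split; [exact: inv1 | exact: inv2].
split; first exact: xiT.
split.
  move=> A; have h := ef_id A (u A) (Hu A).
  rewrite Hxu cast_mull in h.
  have h2 := congr1 (castmx (lam_triv M, erefl (sdim A))) h.
  rewrite castmx_comp castmx_id in h2; rewrite h2.
  by rewrite /J cast_mull mul1mx castmx_comp; apply: castmx_irr.
move=> A B X [k [c [Y [c0 [PY ->]]]]].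
exists k, c, (fun i => xi M (Y i)); split => //; split; first by move=> i; exact: Hsub.
rewrite /lincomb mulmx_sumr mulmx_suml; apply: eq_bigr => i _.
by rewrite -scalemxAr -scalemxAl (xiT _ _ _ (PY i)).
Qed.
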